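(* Let $S$ be a bounded ordered set. For each $i\in S$ let $\langle P_i;\nu_i\rangle$ be a bounded ordered set with $|P_i|\ge 2$, and assume that there are elements $0,1$ such that $0$ and $1$ are the least and greatest elements of every $P_i$ and $P_i\cap P_j=\{0,1\}$ for all $i\ne j$ in $S$. For $i\le j$ in $S$ let $\psi_{ij}\colon P_i\to P_j$ be $0$-separating $\{0,1\}$-preserving monotone maps with $\psi_{ii}=\mathrm{id}_{P_i}$ and $\psi_{jk}\circ\psi_{ij}=\psi_{ik}$ for $i\le j\le k$. Fix $j\in S$, let $R_j=\bigcup\{P_i: i\le j\}$, let \[\hat\nu_j=\mathrm{quo}_{R_j}\Bigl(\bigcup_{i\le j}\nu_i\ \cup\ \bigcup_{i\le j}\psi_{ij}\ \cup\ \bigcup_{i\le j}\psi_{ij}^{-1}\Bigr),\] where maps are regarded as subsets of $R_j^2$ via their graphs $\psi_{ij}=\{(x,\psi_{ij}(x)):x\in P_i\}$ and $\psi_{ij}^{-1}=\{(\psi_{ij}(x),x):x\in P_i\}$, and let $\hat\Theta_j=\hat\nu_j\cap\hat\nu_j^{-1}$. Then the map \[\kappa_j\colon\langle R_j/\hat\Theta_j;\hat\nu_j/\hat\Theta_j\rangle\to\langle P_j;\nu_j\rangle,\qquad \kappa_j(x/\hat\Theta_j)=\psi_{ij}(x)\ \text{ for } x\in P_i,\ i\le j,\] is well defined and is an order isomorphism.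
   Context: An ordered set is bounded if it has a least and a greatest element. For bounded ordered sets $P,Q$, a map $\psi\colon P\to Q$ is a $\{0,1\}$-preserving monotone map if it maps least element to least element, greatest to greatest, and is order-preserving; it is $0$-separating if moreover only the least element of $P$ maps to the least element of $Q$. A quasiordering on a nonempty set $H$ is a reflexive, transitive relation $\nu\subseteq H^2$; for $X\subseteq H^2$, $\mathrm{quo}_H(X)$ denotes the least quasiordering on $H$ containing $X$. For a quasiordered set $\langle H;\nu\rangle$ with $\Theta=\nu\cap\nu^{-1}$ (an equivalence relation), $H/\Theta$ is ordered by $(x/\Theta,y/\Theta)\in\nu/\Theta$ iff $(x,y)\in\nu$. *)

(* Defs.v *)
Set Implicit Arguments.

Definition order_on {T : Type} (A : T -> Prop) (r : T -> T -> Prop) : Prop :=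
  (forall x y, r x y -> A x /\ A y) /\
  (forall x, A x -> r x x) /\
  (forall x y, r x y -> r y x -> x = y) /\
  (forall x y z, r x y -> r y z -> r x z).

Definition least_greatest {T : Type} (A : T -> Prop) (r : T -> T -> Prop)
  (bot top : T) : Prop :=
  A bot /\ A top /\ (forall x, A x -> r bot x /\ r x top).

Definition zero_sep_01_monotone {T : Type} (A B : T -> Prop)
  (rA rB : T -> T -> Prop) (z o : T) (f : T -> T) : Prop :=
  (forall x, A x -> B (f x)) /\
  f z = z /\ f o = o /\
  (forall x y, rA x y -> rB (f x) (f y)) /\
  (forall x, A x -> f x = z -> x = z).

Definition quasiorder_on {T : Type} (H : T -> Prop) (r : T -> T -> Prop) : Prop :=
  (forall x y, r x y -> H x /\ H y) /\
  (forall x, H x -> r x x) /\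
  (forall x y z, r x y -> r y z -> r x z).

Definition quo {T : Type} (H : T -> Prop) (X : T -> T -> Prop) : T -> T -> Prop :=
  fun x y => forall r, quasiorder_on H r -> (forall a b, X a b -> r a b) -> r x y.

Section Construction.
Variables (S U : Type) (leS : S -> S -> Prop) (P : S -> U -> Prop)
  (nu : S -> U -> U -> Prop) (psi : S -> S -> U -> U) (j : S).

Definition Rj : U -> Prop := fun x => exists i, leS i j /\ P i x.

Definition gen_j : U -> U -> Prop := fun a b =>
  exists i, leS i j /\
    (nu i a b \/ (P i a /\ b = psi i j a) \/ (P i b /\ a = psi i j b)).

Definition hatnu : U -> U -> Prop := quo Rj gen_j.

Definition hatTheta : U -> U -> Prop := fun a b => hatnu a b /\ hatnu b a.

Definition Quot : Type :=
  { C : U -> Prop | exists x, Rj x /\ C = hatTheta x }.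

Definition quot_le (C D : Quot) : Prop :=
  exists x y, proj1_sig C = hatTheta x /\ proj1_sig D = hatTheta y /\ hatnu x y.

Definition Pj : Type := { x : U | P j x }.

End Construction.

(* Main.v *)
Require Import Defs.
From Stdlib Require Import Classical ClassicalEpsilon FunctionalExtensionality PropExtensionality ProofIrrelevance.

Lemma sig_eq_pi {A : Type} {Q : A -> Prop} (a b : {x | Q x}) :
  proj1_sig a = proj1_sig b -> a = b.
Proof. destruct a, b; simpl; intros ->; f_equal; apply proof_irrelevance. Qed.

Theorem lemma2
  (S U : Type) (leS : S -> S -> Prop)
  (HS : order_on (fun _ : S => True) leS)
  (HSb : exists b t : S, least_greatest (fun _ => True) leS b t)
  (P : S -> U -> Prop) (nu : S -> U -> U -> Prop) (z o : U)
  (Hnu : forall i, order_on (P i) (nu i))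
  (Hbnd : forall i, least_greatest (P i) (nu i) z o)
  (Hcard : forall i, exists x y, P i x /\ P i y /\ x <> y)
  (Hdisj : forall i k, i <> k -> forall x, P i x -> P k x -> x = z \/ x = o)
  (psi : S -> S -> U -> U)
  (Hpsi : forall i k, leS i k ->
     zero_sep_01_monotone (P i) (P k) (nu i) (nu k) z o (psi i k))
  (Hid : forall i x, P i x -> psi i i x = x)
  (Hcomp : forall i k l, leS i k -> leS k l -> forall x, P i x ->
     psi k l (psi i k x) = psi i l x)
  (j : S) :
  exists kappa : Quot leS P nu psi j -> Pj P j,
    (forall (C : Quot leS P nu psi j) i x, leS i j -> P i x ->
        proj1_sig C = hatTheta leS P nu psi j x ->
        proj1_sig (kappa C) = psi i j x) /\
    (forall y : Pj P j, exists C, kappa C = y) /\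
    (forall C D, kappa C = kappa D -> C = D) /\
    (forall C D : Quot leS P nu psi j, quot_le C D <->
                 nu j (proj1_sig (kappa C)) (proj1_sig (kappa D))).
Proof.
  destruct HS as [_ [Hrefl [_ _]]].
  assert (Hjj : leS j j) by (apply Hrefl; exact I).
  assert (Hfun : forall i k a, leS i j -> leS k j -> P i a -> P k a ->
            psi i j a = psi k j a).
  { intros i k a Hi Hk Pi Pk. destruct (classic (i = k)) as [<-|Hne]; [reflexivity|].
    destruct (Hpsi i j Hi) as (_&Hz&Ho&_). destruct (Hpsi k j Hk) as (_&Hz'&Ho'&_).
    destruct (Hdisj i k Hne a Pi Pk) as [->| ->]; congruence. }
  assert (HPj : forall i a, leS i j -> P i a -> P j (psi i j a)).
  { intros i a Hi Pa. destruct (Hpsi i j Hi) as [Hm _]. auto. }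
  destruct (Hnu j) as [Hdomj [Hnrefl [Hnanti Hntrans]]].
  set (r := fun a b => exists i k, leS i j /\ leS k j /\ P i a /\ P k b /\
                                   nu j (psi i j a) (psi k j b)).
  set (hn := hatnu leS P nu psi j).
  assert (Hr_hat : forall a b, hn a b -> r a b).
  { intros a b H. unfold hn, hatnu, quo in H. apply H.
    - split; [|split].
      + intros x y (i&k&Hi&Hk&Px&Py&_). split; [exists i|exists k]; auto.
      + intros x (i&Hi&Px). exists i, i. repeat split; auto.
      + intros x y w (i&k&Hi&Hk&Px&Py&H1) (k'&l&Hk'&Hl&Py'&Pw&H2).
        exists i, l. repeat split; auto. apply Hntrans with (psi k j y); auto.
        rewrite (Hfun k k' y); auto.
    - intros a0 b0 (i&Hi&[Hn|[[Pa ->]|[Pb ->]]]).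
      + destruct (Hnu i) as [Hd _]. destruct (Hd _ _ Hn) as [Pa Pb].
        exists i, i. repeat split; auto. destruct (Hpsi i j Hi) as (_&_&_&Hm&_). auto.
      + exists i, j. repeat split; auto. rewrite Hid; auto.
      + exists j, i. repeat split; auto. rewrite Hid; auto. }
  assert (Hhat_trans : forall a b c, hn a b -> hn b c -> hn a c).
  { unfold hn, hatnu, quo. intros a b c H1 H2 r0 Hq HX.
    pose proof Hq as Hq'. destruct Hq' as (_&_&Ht). apply Ht with b; [apply H1|apply H2]; auto. }
  assert (Hgen : forall a b, gen_j leS P nu psi j a b -> hn a b).
  { unfold hn, hatnu, quo. intros; auto. }
  assert (Hhat_r : forall a b, r a b -> hn a b).
  { intros a b (i&k&Hi&Hk&Pa&Pb&Hn).
    apply Hhat_trans with (psi i j a).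
    { apply Hgen. exists i. split; [exact Hi|]. right; left; auto. }
    apply Hhat_trans with (psi k j b).
    { apply Hgen; exists j; split; [exact Hjj|]. left; auto. }
    apply Hgen; exists k; split; [exact Hk|]. right; right; auto. }
  assert (Hchar : forall i k a b, leS i j -> leS k j -> P i a -> P k b ->
            (hn a b <-> nu j (psi i j a) (psi k j b))).
  { intros i k a b Hi Hk Pa Pb. split.
    - intro H. destruct (Hr_hat _ _ H) as (i'&k'&Hi'&Hk'&Pa'&Pb'&Hn).
      rewrite (Hfun i i' a), (Hfun k k' b); auto.
    - intro; apply Hhat_r; exists i, k; auto. }
  set (th := hatTheta leS P nu psi j).
  assert (Htheta : forall i k a b, leS i j -> leS k j -> P i a -> P k b ->
            th a b -> psi i j a = psi k j b).
  { intros i k a b Hi Hk Pa Pb [H1 H2]. apply Hnanti.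
    - exact (proj1 (Hchar i k a b Hi Hk Pa Pb) H1).
    - exact (proj1 (Hchar k i b a Hk Hi Pb Pa) H2). }
  assert (Hth_refl : forall a, Rj leS P j a -> th a a).
  { intros a (i&Hi&Pa). assert (hn a a) by (apply (Hchar i i); auto).
    split; auto. }
  assert (Hth_eq : forall a b, th a b -> th a = th b).
  { intros a b [H1 H2]. apply functional_extensionality; intro w.
    apply propositional_extensionality. unfold th, hatTheta.
    fold hn. split; intros [H3 H4]; split; eauto. }
  assert (Hk : forall C : Quot leS P nu psi j, {y : Pj P j | exists x i,
     leS i j /\ P i x /\ proj1_sig C = th x /\ proj1_sig y = psi i j x}).
  { intro C.
    assert (Hw : exists p : U * S, leS (snd p) j /\ P (snd p) (fst p) /\
               proj1_sig C = th (fst p)).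
    { destruct (proj2_sig C) as (x&(i&Hi&Px)&HC). exists (x, i); simpl; auto. }
    apply constructive_indefinite_description in Hw.
    destruct Hw as [[x i] (Hi&Px&HC)]; simpl in *.
    exists (exist _ (psi i j x) (HPj i x Hi Px)). exists x, i. auto. }
  exists (fun C => proj1_sig (Hk C)).
  assert (Hwd : forall (C : Quot leS P nu psi j) i x, leS i j -> P i x ->
        proj1_sig C = th x -> proj1_sig (proj1_sig (Hk C)) = psi i j x).
  { intros C i x Hi Px HC. destruct (proj2_sig (Hk C)) as (x0&i0&Hi0&Px0&HC0&->).
    apply (Htheta i0 i x0 x); auto.
    assert (Heq : th x = th x0) by congruence.
    assert (H := Hth_refl x (ex_intro _ i (conj Hi Px))).
    rewrite Heq in H. exact H. }
  split; [exact Hwd|]. split; [|split].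
  - intros [y Py].
    assert (Hq : exists x, Rj leS P j x /\ th y = th x).
    { exists y. split; auto. exists j; auto. }
    exists (exist _ (th y) Hq). apply sig_eq_pi.
    change (proj1_sig (proj1_sig (Hk (exist _ (th y) Hq))) = y).
    rewrite (Hwd (exist _ (th y) Hq) j y Hjj Py eq_refl); auto.
  - intros C D H. apply sig_eq_pi.
    destruct (proj2_sig (Hk C)) as (x&i&Hi&Px&HC&EC).
    destruct (proj2_sig (Hk D)) as (y&k&Hk'&Py&HD&ED).
    rewrite HC, HD. apply Hth_eq.
    assert (E : psi i j x = psi k j y) by (rewrite <- EC, <- ED, H; reflexivity).
    split; [apply (Hchar i k)|apply (Hchar k i)]; auto; rewrite E; auto.
  - intros C D. split.
    + intros (x&y&HCx&HDy&Hxy).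
      destruct (Hr_hat _ _ Hxy) as (i&k&Hi&Hk'&Px&Py&Hn).
      rewrite (Hwd C i x), (Hwd D k y); auto.
    + intro H.
      destruct (proj2_sig (Hk C)) as (x&i&Hi&Px&HC&EC).
      destruct (proj2_sig (Hk D)) as (y&k&Hk'&Py&HD&ED).
      exists x, y. split; [|split]; auto.
      apply (Hchar i k); auto. rewrite <- EC, <- ED; auto.
Qed.
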